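(* Let $\mathcal{X}$ be a $d$-dimensional manifold with volume form $V$, $G$ a probability measure on $\mathcal{X}$ with density $g$ w.r.t. $V$, $\mathcal{Y}\subset\mathbb{R}$ with measure $\mu$ (Lebesgue or counting), and $\nu=V\times\mu$. For a latent function $f:\mathcal{X}\to\mathbb{R}$ let $\pi_f(x,y)=\pi_f(y\mid x)g(x)$, where $\pi_f(y\mid x)=h(y)\exp\{\theta(x)\kappa(y)-J(\theta(x))\}$ is a one-parameter canonical exponential family with $\theta=\zeta\circ f$. Assume $J\in C^2(\mathbb{R})$, the family is minimal with $J'$ invertible, $\varphi=J'\circ\theta=l\circ f$ for a link function $l$, $\zeta=(J')^{-1}\circ l$, and $l,\zeta$ are continuously differentiable with uniformly bounded derivatives. Then: 1. If $f_1,f_2$ take values in a bounded set $\Omega\subset\mathbb{R}$, there exist positive constants $C_4(\Omega),C_5(\Omega)$ such that $\mathrm{KL}(\pi_{f_1};\pi_{f_2})\le C_4(\Omega)\|f_1-f_2\|_\infty^2$ and $V_{2,0}(\pi_{f_1};\pi_{f_2})\le C_5(\Omega)\|f_1-f_2\|_\infty^2$. 2. There exists a uniform constant $C_6$ such that $d_H^2(\pi_{f_1},\pi_{f_2})\le C_6\|f_1-f_2\|_\infty^2$.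
   Context: $h\ge0$, $\kappa$ are functions of $y$ and $J(\theta)=\log\int_{\mathcal{Y}}h(y)e^{\theta\kappa(y)}d\mu(y)$. $\mathrm{KL}(\pi_{f_1};\pi_{f_2})=\mathbb{E}_{\pi_{f_1}}\log(\pi_{f_1}/\pi_{f_2})$; $V_{2,0}(\pi_{f_1};\pi_{f_2})=\mathbb{E}_{\pi_{f_1}}|\log(\pi_{f_1}/\pi_{f_2})-\mathrm{KL}(\pi_{f_1};\pi_{f_2})|^2$; $d_H(\pi_{f_1},\pi_{f_2})=\{\int(\sqrt{\pi_{f_1}}-\sqrt{\pi_{f_2}})^2d\nu\}^{1/2}$; $\|f\|_\infty=\sup_x|f(x)|$. *)

(* Defs.v *)
From HB Require Import structures.
From mathcomp Require Import all_boot all_order all_algebra.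
From mathcomp Require Import all_classical all_reals all_analysis.
Import Order.TTheory GRing.Theory Num.Theory.
Import numFieldNormedType.Exports.
Set Implicit Arguments. Unset Strict Implicit. Unset Printing Implicit Defensive.
Local Open Scope classical_set_scope.
Local Open Scope ring_scope.

Section Defs.
Context {R : realType}.

Definition Jfun (mu : {measure set (measurableTypeR R) -> \bar R}) (Y : set R)
  (h kappa : R -> R) (t : R) : R :=
  ln (fine (\int[mu]_(y in Y) (h y * expR (t * kappa y))%:E)).

Definition minimal_family (mu : {measure set (measurableTypeR R) -> \bar R})
  (Y : set R) (h kappa : R -> R) : Prop :=
  forall a b : R,
    mu.-negligible (Y `&` [set y | h y != 0 /\ a * kappa y != b]) -> a = 0.

Context {d : measure_display} {X : measurableType d}.

Definition pi_f (g : X -> R) (h kappa J zeta : R -> R) (f : X -> R)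
  (x : X) (y : R) : R :=
  h y * expR (zeta (f x) * kappa y - J (zeta (f x))) * g x.

(* integral w.r.t. nu = V x mu over X x Y (iterated) *)
Definition nu_int (V : {measure set X -> \bar R})
  (mu : {measure set (measurableTypeR R) -> \bar R}) (Y : set R)
  (F : X -> R -> \bar R) : \bar R :=
  (\int[V]_x \int[mu]_(y in Y) F x y)%E.

Definition KLdiv V mu Y (p1 p2 : X -> R -> R) : \bar R :=
  nu_int V mu Y (fun x y => (p1 x y * ln (p1 x y / p2 x y))%:E).

Definition V20 V mu Y (p1 p2 : X -> R -> R) : \bar R :=
  nu_int V mu Y (fun x y =>
    (p1 x y * `|ln (p1 x y / p2 x y) - fine (KLdiv V mu Y p1 p2)| ^+ 2)%:E).

Definition hellinger2 V mu Y (p1 p2 : X -> R -> R) : \bar R :=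
  nu_int V mu Y (fun x y => ((Num.sqrt (p1 x y) - Num.sqrt (p2 x y)) ^+ 2)%:E).

Definition supnorm (f1 f2 : X -> R) : \bar R :=
  ereal_sup (range (fun x => (`|f1 x - f2 x|)%:E)).

End Defs.

(* Main.v *)
Require Import Defs.
From HB Require Import structures.
From mathcomp Require Import all_boot all_order all_algebra.
From mathcomp Require Import all_classical all_reals all_analysis.
Import Order.TTheory GRing.Theory Num.Theory.
Import numFieldNormedType.Exports.
Local Open Scope classical_set_scope.
Local Open Scope ring_scope.
From mathcomp Require Import ring lra.
Section S.
Context {d : measure_display} {T : measurableType d} {R : realType}.
Variable mu : {measure set T -> \bar R}.
Local Open Scope ereal_scope.
Lemma mono_nn (D : set T) (f g : T -> \bar R) :
  (forall x, D x -> 0 <= f x) -> (forall x, D x -> f x <= g x) ->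
  \int[mu]_(x in D) f x <= \int[mu]_(x in D) g x.
Proof.
move=> f0 fg.
have g0 : forall x, D x -> 0 <= g x by move=> x Dx; exact: le_trans (f0 _ Dx) (fg _ Dx).
rewrite !ge0_integralE//; apply: ereal_sup_le => _ [h hf <-]; exists h => //= x.
apply: le_trans (hf x) _; exact: lee_restrict.
Qed.
Lemma le_int (D : set T) (f g : T -> \bar R) :
  (forall x, D x -> f x <= g x) ->
  \int[mu]_(x in D) f x <= \int[mu]_(x in D) g x.
Proof.
move=> fg; rewrite integralE [leRHS]integralE leeB//.
- apply: mono_nn => x Dx; first exact: funepos_ge0.
  apply: (funepos_le (D:=D)); last exact: mem_set.
  by move=> y /set_mem; exact: fg.
- apply: mono_nn => x Dx; first exact: funeneg_ge0.
  apply: (funeneg_le (D:=D)); last exact: mem_set.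
  by move=> y /set_mem; exact: fg.
Qed.
End S.
Section Inner.
Context {R : realType}.
Variables (Y : set R) (mu : {measure set (measurableTypeR R) -> \bar R}) (h kappa : R -> R).
Hypotheses (mY : measurable Y) (mh : measurable_fun Y h) (mk : measurable_fun Y kappa)
  (h0 : forall y, Y y -> 0 <= h y)
  (fin : forall t : R, (0 < \int[mu]_(y in Y) (h y * expR (t * kappa y))%:E < +oo)%E).

Let mY' : measurable (Y : set (measurableTypeR R)) := mY.
Definition EE (t : R) (y : R) := h y * expR (t * kappa y).

Lemma EE_int t : mu.-integrable Y (EFin \o EE t).
Proof.
apply/integrableP; split.
  apply/measurable_realfun.measurable_EFinP; apply: measurable_realfun.measurable_funM => //.
  apply: measurableT_comp => //; apply: measurable_realfun.measurable_funM => //.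
have -> : (\int[mu]_(x in Y) `|(EFin \o EE t) x| = \int[mu]_(x in Y) (EE t x)%:E)%E.
  apply: eq_integral => y /set_mem Yy /=.
  by rewrite ger0_norm// /EE mulr_ge0 ?h0// expR_ge0.
by case/andP: (fin t).
Qed.

Lemma EE_intE t : (\int[mu]_(y in Y) (EE t y)%:E)%E = (expR (Jfun mu Y h kappa t))%:E.
Proof.
have /andP[a b] := fin t.
rewrite /Jfun lnK ?fineK//; first by rewrite ge0_fin_numE// ltW.
rewrite posrE -lte_fin fineK//; by rewrite ge0_fin_numE// ltW.
Qed.

Lemma lin3 a1 a2 a3 t1 t2 t3 :
  (\int[mu]_(y in Y) (a1 * EE t1 y + a2 * EE t2 y + a3 * EE t3 y)%:E)%E =
  (a1 * expR (Jfun mu Y h kappa t1) + a2 * expR (Jfun mu Y h kappa t2)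
   + a3 * expR (Jfun mu Y h kappa t3))%:E.
Proof.
have iZ a t : mu.-integrable Y (EFin \o (fun y => a * EE t y)).
  apply: (eq_integrable mY' (fun y => a%:E * (EFin \o EE t) y)%E); last exact: integrableZl (EE_int t).
  by move=> y _ /=; rewrite EFinM.
have iZE a t : (\int[mu]_(y in Y) (a * EE t y)%:E)%E = (a * expR (Jfun mu Y h kappa t))%:E.
  transitivity (\int[mu]_(y in Y) (a%:E * (EFin \o EE t) y))%E.
    by apply: eq_integral => y _; rewrite EFinM.
  by rewrite integralZl// ?EE_int// EE_intE EFinM.
transitivity (\int[mu]_(y in Y) ((EFin \o (fun y => (a1 * EE t1 y + a2 * EE t2 y)%R)) y + (EFin \o (fun y => (a3 * EE t3 y)%R)) y))%E.
  by apply: eq_integral => y _; rewrite EFinD.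
rewrite integralD_EFin//; last first.
  apply: (eq_integrable mY' _ _ _ (integrableD mY' (iZ a1 t1) (iZ a2 t2))).
  by move=> y _ /=; rewrite EFinD.
transitivity ((\int[mu]_(y in Y) ((EFin \o (fun y => (a1 * EE t1 y)%R)) y + (EFin \o (fun y => (a2 * EE t2 y)%R)) y)) + \int[mu]_(y in Y) (EFin \o (fun y => (a3 * EE t3 y)%R)) y)%E.
  congr (_ + _)%E; apply: eq_integral => y _; by rewrite /= EFinD.
rewrite integralD_EFin// /= !iZE.
by rewrite -!EFinD.
Qed.
End Inner.
Section An.
Context {R : realType}.

Lemma mvt (f : R -> R) u v : (forall x, derivable f x 1) -> u < v ->
  exists2 c, u < c < v & f v - f u = derive1 f c * (v - u).
Proof.
move=> df uv.
have [c cin ->] := @MVT R f (derive1 f) u v uv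
  (fun x _ => (eq_ind _ (fun z => is_derive x 1 f z) (derivableP (df x)) _ (esym (derive1E f x))))
  (derivable_within_continuous (fun x _ => df x)).
by exists c => //; move: cin; rewrite in_itv.
Qed.

Lemma lip (f : R -> R) a b L u v : (forall x, derivable f x 1) ->
  (forall x, a <= x <= b -> `|derive1 f x| <= L) ->
  a <= u <= b -> a <= v <= b -> `|f u - f v| <= L * `|u - v|.
Proof.
move=> df fL.
wlog: u v / u <= v.
  move=> W hu hv; have [uv|vu] := leP u v; first exact: W.
  by rewrite distrC [`|u - v|]distrC; apply: W => //; exact: ltW.
rewrite le_eqVlt => /predU1P[-> _ _|uv /andP[au ub] /andP[av vb]].
  by rewrite !subrr normr0 mulr0.
have [c /andP[uc cv] e] := mvt f u v df uv.
rewrite distrC e [`|u - v|]distrC normrM.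
apply: ler_wpM2r => //; apply: fL.
by rewrite (le_trans au (ltW uc)) (le_trans (ltW cv) vb).
Qed.

Lemma sd_pos (F : R -> R) c e K : (forall x, derivable F x 1) -> 0 < e ->
  (forall u v, c - e <= u <= c + e -> c - e <= v <= c + e ->
     `|derive1 F u - derive1 F v| <= K) ->
  `|F (c + e) + F (c - e) - 2 * F c| <= K * e.
Proof.
move=> dF e0 HK.
have ce1 : c < c + e by rewrite ltrDl.
have ce2 : c - e < c by rewrite ltrBlDr ltrDl.
have [x1 /andP[a1 b1] E1] := mvt F c (c + e) dF ce1.
have [x2 /andP[a2 b2] E2] := mvt F (c - e) c dF ce2.
have -> : F (c + e) + F (c - e) - 2 * F c = (F (c + e) - F c) - (F c - F (c - e)) by ring.
have r1 : c + e - c = e by ring.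
have r2 : c - (c - e) = e by ring.
rewrite E1 E2 r1 r2 -mulrBl normrM (gtr0_norm e0) ler_wpM2r ?(ltW e0)//.
apply: HK; apply/andP; split.
- by rewrite (le_trans (ltW ce2)) ?(ltW a1).
- exact: ltW b1.
- exact: ltW a2.
- by rewrite (le_trans (ltW b2)) ?(ltW ce1).
Qed.

Lemma sd (F : R -> R) c e K : (forall x, derivable F x 1) ->
  (forall u v, c - `|e| <= u <= c + `|e| -> c - `|e| <= v <= c + `|e| ->
     `|derive1 F u - derive1 F v| <= K) ->
  `|F (c + e) + F (c - e) - 2 * F c| <= K * `|e|.
Proof.
move=> dF HK.
have [e0|e0|->] := ltgtP e 0; last first.
- by rewrite addr0 subr0 normr0 mulr0 (_ : F c + F c - 2 * F c = 0) ?normr0 //; ring.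
- rewrite [`|e|](gtr0_norm e0); rewrite (gtr0_norm e0) in HK; exact: (@sd_pos F c e K dF e0).
rewrite [`|e|](ltr0_norm e0).
have := @sd_pos F c (- e) K dF; rewrite oppr_gt0 => /(_ e0).
rewrite opprK (addrC (F (c - e))); apply.
by rewrite (ltr0_norm e0) opprK in HK.
Qed.
End An.
Section Pw.
Context {R : realType}.

Lemma ratio (A e1 e2 : R) : 0 < A -> ln (A * expR e1 / (A * expR e2)) = e1 - e2.
Proof.
move=> A0; rewrite invfM mulrACA mulfV ?gt_eqF// mul1r -expRN -expRD expRK//.
Qed.

Lemma sq_pos (u : R) : 0 <= u -> u ^+ 2 <= 4 * (expR u + expR (- u) - 2).
Proof.
move=> u0.
have h1 := expR_ge1Dx (u / 2).
have h2 := expR_ge1Dx (- u).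
have e : expR u = expR (u / 2) ^+ 2 by rewrite -expRM_natl; congr expR; lra.
have h3 : (1 + u / 2) ^+ 2 <= expR (u / 2) ^+ 2.
  by rewrite ler_sqr ?nnegrE//; lra.
rewrite e; nra.
Qed.

Lemma sq_all (u : R) : u ^+ 2 <= 4 * (expR u + expR (- u) - 2).
Proof.
have [u0|u0] := leP 0 u; first exact: sq_pos.
have := @sq_pos (- u); rewrite oppr_ge0 (ltW u0) opprK sqrrN => /(_ isT).
lra.
Qed.

Lemma pw1 (A e1 e2 : R) : 0 <= A ->
  A * expR e1 * ln (A * expR e1 / (A * expR e2)) <= A * expR (2 * e1 - e2) - A * expR e1.
Proof.
rewrite le_eqVlt => /predU1P[<-|A0]; first by rewrite !mul0r ?mulr0 ?subrr.
rewrite ratio// (_ : 2 * e1 - e2 = e1 + (e1 - e2)); last by ring.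
rewrite expRD.
have := expR_ge1Dx (e1 - e2).
have := expR_gt0 e1.
set a := expR e1; set b := expR (e1 - e2) => pa hb.
have : 0 < A * a by rewrite mulr_gt0.
nra.
Qed.

Lemma pw2 (A e1 e2 : R) : 0 <= A ->
  A * expR e1 - A * expR e2 <= A * expR e1 * ln (A * expR e1 / (A * expR e2)).
Proof.
rewrite le_eqVlt => /predU1P[<-|A0]; first by rewrite !mul0r ?mulr0 ?subrr.
rewrite ratio// (_ : e2 = e1 + (- (e1 - e2))) ?[in X in _ - X <= _]expRD; last by ring.
have := expR_ge1Dx (- (e1 - e2)).
have := expR_gt0 e1.
set a := expR e1; set b := expR (- (e1 - e2)) => pa hb.
have : 0 < A * a by rewrite mulr_gt0.
nra.
Qed.

Lemma pw3 (A e1 e2 K : R) : 0 <= A ->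
  A * expR e1 * `|ln (A * expR e1 / (A * expR e2)) - K| ^+ 2 <=
  8 * (A * expR (2 * e1 - e2)) + 8 * (A * expR e2) + (2 * K ^+ 2 - 16) * (A * expR e1).
Proof.
rewrite le_eqVlt => /predU1P[<-|A0]; first by rewrite !mul0r ?mulr0; lra.
rewrite ratio// real_normK ?num_real//.
rewrite (_ : 2 * e1 - e2 = e1 + (e1 - e2)); last by ring.
rewrite [in X in _ <= _ + 8 * (A * X) + _](_ : e2 = e1 + (- (e1 - e2))); last by ring.
rewrite (expRD e1 (e1 - e2)) (expRD e1 (- (e1 - e2))).
have := sq_all (e1 - e2).
have := expR_gt0 e1.
set a := expR e1; set b := expR (e1 - e2); set c := expR (- (e1 - e2)); set u := e1 - e2.
move=> pa hs.
have p : 0 < A * a by rewrite mulr_gt0.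
have q : (u - K) ^+ 2 <= 2 * u ^+ 2 + 2 * K ^+ 2.
  have := sqr_ge0 (u + K).
  rewrite (_ : 2 * u ^+ 2 + 2 * K ^+ 2 = (u - K) ^+ 2 + (u + K) ^+ 2); last by ring.
  lra.
have r : (u - K) ^+ 2 <= 8 * b + 8 * c + 2 * K ^+ 2 - 16 by lra.
have -> : 8 * (A * (a * b)) + 8 * (A * (a * c)) + (2 * K ^+ 2 - 16) * (A * a) = (A * a) * (8 * b + 8 * c + 2 * K ^+ 2 - 16) by ring.
by apply: ler_wpM2l; [exact: ltW|exact: r].
Qed.

Lemma sqrtE (A e : R) : 0 <= A -> Num.sqrt (A * expR e) = Num.sqrt A * expR (e / 2).
Proof.
move=> A0; rewrite sqrtrM// (_ : expR e = expR (e / 2) ^+ 2); last first.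
  by rewrite -expRM_natl; congr expR; lra.
by rewrite sqrtr_sqr ger0_norm// expR_ge0.
Qed.

Lemma pw4 (A e1 e2 : R) : 0 <= A ->
  (Num.sqrt (A * expR e1) - Num.sqrt (A * expR e2)) ^+ 2 <=
  A * expR e1 + A * expR e2 - 2 * (A * expR ((e1 + e2) / 2)).
Proof.
move=> A0; rewrite !sqrtE//.
have eA : Num.sqrt A ^+ 2 = A by rewrite sqr_sqrtr.
have E1 : expR e1 = expR (e1 / 2) ^+ 2 by rewrite -expRM_natl; congr expR; lra.
have E2 : expR e2 = expR (e2 / 2) ^+ 2 by rewrite -expRM_natl; congr expR; lra.
have E3 : expR ((e1 + e2) / 2) = expR (e1 / 2) * expR (e2 / 2) by rewrite -expRD; congr expR; lra.
rewrite E1 E2 E3; set s := Num.sqrt A.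
have eS : s ^+ 2 = A by rewrite /s sqr_sqrtr.
rewrite -!eS le_eqVlt; apply/orP; left; apply/eqP; ring.
Qed.
End Pw.

Section Aux.
Context {R : realType}.

Lemma eqle (x y : R) : x = y -> x <= y.
Proof. by move->. Qed.

Lemma glip (f : R -> R) L : (forall x, derivable f x 1) ->
  (forall x, `|derive1 f x| <= L) -> forall u v, `|f u - f v| <= L * `|u - v|.
Proof.
move=> df fL u v; apply: (@lip R f (Num.min u v) (Num.max u v)) => //.
- by rewrite ge_min le_max !lexx ?orbT.
- by rewrite ge_min le_max !lexx ?orbT.
Qed.

Lemma bnd (F : R -> R) T0 : continuous F -> 0 <= T0 ->
  exists C, 0 <= C /\ forall t, - T0 <= t <= T0 -> `|F t| <= C.
Proof.
move=> cF T0p.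
have [c _ Hc] := @EVT_max R (fun t => `|F t|) (- T0) T0 ltac:(lra)
  (continuous_subspaceT (fun x => continuous_comp (cF x) (@norm_continuous _ _ _))).
exists `|F c|; split => // t tb; apply: Hc; by rewrite in_itv.
Qed.

Lemma expm1_le (D M : R) : `|D| <= M -> expR D - 1 <= `|D| * expR M.
Proof.
move=> DM.
have h1 := expR_ge1Dx (- `|D|).
have e1 : expR `|D| * expR (- `|D|) = 1 by rewrite -expRD subrr expR0.
have h2 : expR `|D| - 1 <= `|D| * expR `|D|.
  have p := expR_gt0 `|D|.
  have : expR `|D| * (1 + - `|D|) <= expR `|D| * expR (- `|D|) by rewrite ler_wpM2l// ltW.
  rewrite e1; nra.
have h3 : expR D <= expR `|D| by rewrite ler_expR ler_norm.
have h4 : expR `|D| <= expR M by rewrite ler_expR.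
have h5 : `|D| * expR `|D| <= `|D| * expR M by rewrite ler_wpM2l.
lra.
Qed.

Lemma mm (a b u : R) : (a + b) / 2 - `|(a - b) / 2| <= u <= (a + b) / 2 + `|(a - b) / 2| ->
  Num.min a b <= u <= Num.max a b.
Proof.
have [ab|ba] := leP a b.
- rewrite ler0_norm; last by rewrite pmulr_lle0 ?invr_gt0//; lra.
  lra.
- rewrite ger0_norm; last by rewrite pmulr_lge0 ?invr_gt0//; lra.
  lra.
Qed.

Lemma mmlen (p q a b : R) : Num.min p q <= a <= Num.max p q ->
  Num.min p q <= b <= Num.max p q -> `|a - b| <= `|p - q|.
Proof.
have [pq|qp] := leP p q.
- rewrite (ler0_norm (x := p - q)); last lra.
  rewrite ler_norml; lra.
- rewrite (ger0_norm (x := p - q)); last lra.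
  rewrite ler_norml; lra.
Qed.

End Aux.
Theorem lemma7 (R : realType) (d : measure_display) (X : measurableType d)
  (V : {measure set X -> \bar R}) (g : X -> R)
  (Y : set R) (mu : {measure set (measurableTypeR R) -> \bar R})
  (h kappa l zeta : R -> R) :
  sigma_finite setT V ->
  measurable_fun setT g -> (forall x, 0 <= g x) ->
  (\int[V]_x (g x)%:E = 1)%E ->
  measurable Y ->
  ((forall A, mu A = lebesgue_measure A) \/ (forall A, mu A = counting A)) ->
  measurable_fun Y h -> measurable_fun Y kappa -> (forall y, Y y -> 0 <= h y) ->
  (forall t : R, (0 < \int[mu]_(y in Y) (h y * expR (t * kappa y))%:E < +oo)%E) ->
  let J := Jfun mu Y h kappa in
  (* J in C^2(R) *)
  (forall t, derivable J t 1) -> (forall t, derivable (derive1 J) t 1) ->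
  continuous (derive1 (derive1 J)) ->
  minimal_family mu Y h kappa ->
  injective (derive1 J) ->
  (* zeta = (J')^{-1} o l *)
  (forall t, derive1 J (zeta t) = l t) ->
  (* l, zeta are C^1 with uniformly bounded derivatives *)
  (forall t, derivable l t 1) -> continuous (derive1 l) ->
  (exists M : R, forall t, `|derive1 l t| <= M) ->
  (forall t, derivable zeta t 1) -> continuous (derive1 zeta) ->
  (exists M : R, forall t, `|derive1 zeta t| <= M) ->
  let pi := pi_f g h kappa J zeta in
  (forall Omega : set R, (exists B : R, forall t, Omega t -> `|t| <= B) ->
     exists C4 C5 : R, 0 < C4 /\ 0 < C5 /\
       forall f1 f2 : X -> R, measurable_fun setT f1 -> measurable_fun setT f2 ->
         (forall x, Omega (f1 x)) -> (forall x, Omega (f2 x)) ->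
         (KLdiv V mu Y (pi f1) (pi f2) <= C4%:E * (supnorm f1 f2 * supnorm f1 f2))%E /\
         (V20 V mu Y (pi f1) (pi f2) <= C5%:E * (supnorm f1 f2 * supnorm f1 f2))%E)
  /\
  (exists C6 : R, 0 < C6 /\
     forall f1 f2 : X -> R, measurable_fun setT f1 -> measurable_fun setT f2 ->
       (hellinger2 V mu Y (pi f1) (pi f2) <= C6%:E * (supnorm f1 f2 * supnorm f1 f2))%E).
Proof.
Proof.
move=> _ mg g0 gint mY _ mh mk h0 fin J dJ ddJ cJ2 _ _ zl dl cl [Ml HMl] dz cz [Mz HMz] pi.
have Jdef : J = Jfun mu Y h kappa by [].
clearbody J.
have Ml0 : 0 <= Ml := le_trans (normr_ge0 _) (HMl 0).
have Mz0 : 0 <= Mz := le_trans (normr_ge0 _) (HMz 0).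
have zlip := @glip _ zeta Mz dz HMz.
have llip := @glip _ l Ml dl HMl.
have piE f x y : pi f x y = (h y * g x) * expR (zeta (f x) * kappa y - J (zeta (f x))).
  by rewrite /pi /pi_f; move: (h y) (g x) (expR _) => a b c; ring.
clearbody pi.
have intg c : 0 <= c -> (\int[V]_x (g x * c)%:E = c%:E)%E.
  move=> c0; transitivity (\int[V]_x (c%:E * (g x)%:E))%E.
    by apply: eq_integral => x _; rewrite EFinM muleC.
  rewrite ge0_integralZl_EFin//; first by rewrite gint mule1.
  - by move=> x _; rewrite lee_fin.
  - exact/measurable_realfun.measurable_EFinP.
have supP (f1 f2 : X -> R) (s : R) : supnorm f1 f2 = s%:E -> forall x, `|f1 x - f2 x| <= s.
  move=> E x; rewrite -lee_fin -E; apply: ereal_sup_ubound; by exists x.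
have E2 (a b c : R) : a = b + c -> expR a = expR b * expR c by move->; rewrite expRD.
have L3 a1 a2 a3 t1 t2 t3 : (\int[mu]_(y in Y) (a1 * EE h kappa t1 y + a2 * EE h kappa t2 y + a3 * EE h kappa t3 y)%:E)%E =
  (a1 * expR (J t1) + a2 * expR (J t2) + a3 * expR (J t3))%:E.
  by rewrite Jdef lin3.
have KLin' (t1 t2 G : R) : 0 <= G ->
  (\int[mu]_(y in Y) ((h y * G) * expR (t1 * kappa y - J t1) *
     ln ((h y * G) * expR (t1 * kappa y - J t1) / ((h y * G) * expR (t2 * kappa y - J t2))))%:E <=
    (G * (expR (J (2 * t1 - t2) - 2 * J t1 + J t2) - 1))%:E)%E.
  move=> G0.
  pose a1 := G * expR (- (2 * J t1) + J t2).
  pose a2 := - (G * expR (- J t1)).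
  apply: le_trans (@le_int _ _ _ mu Y _ (fun y => (a1 * EE h kappa (2 * t1 - t2) y + a2 * EE h kappa t1 y + 0 * EE h kappa t1 y)%:E) _) _.
    move=> y Yy; rewrite lee_fin.
    apply: le_trans (pw1 (h y * G) (t1 * kappa y - J t1) (t2 * kappa y - J t2) (mulr_ge0 (h0 _ Yy) G0)) _.
    apply: eqle; rewrite /EE /a1 /a2.
    rewrite (E2 _ ((2 * t1 - t2) * kappa y) (- (2 * J t1) + J t2)); last by move: (J t1) (J t2) => j1 j2; ring.
    rewrite (E2 (t1 * kappa y - J t1) (t1 * kappa y) (- J t1)) //.
    move: (expR _) (expR _) (expR _) (expR _) (h y) => e1 e2 e3 e4 hy; ring.
  rewrite L3 lee_fin; apply: eqle; rewrite /a1 /a2.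
  transitivity (G * (expR (- (2 * J t1) + J t2) * expR (J (2 * t1 - t2)) - expR (- J t1) * expR (J t1))).
    by move: (expR (- (2 * J t1) + J t2)) (expR (J (2 * t1 - t2))) (expR (- J t1)) (expR (J t1)) => e1 e2 e3 e4; ring.
  rewrite -!expRD addNr expR0; congr (_ * (expR _ - 1)).
  by move: (J t1) (J t2) (J (2 * t1 - t2)) => j1 j2 j3; ring.
have KLlo' (t1 t2 G : R) : 0 <= G ->
  (0 <= \int[mu]_(y in Y) ((h y * G) * expR (t1 * kappa y - J t1) *
     ln ((h y * G) * expR (t1 * kappa y - J t1) / ((h y * G) * expR (t2 * kappa y - J t2))))%:E)%E.
  move=> G0.
  pose a1 := G * expR (- J t1).
  pose a2 := - (G * expR (- J t2)).
  apply: le_trans (@le_int _ _ _ mu Y (fun y => (a1 * EE h kappa t1 y + a2 * EE h kappa t2 y + 0 * EE h kappa t1 y)%:E) _ _); last first.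
    move=> y Yy; rewrite lee_fin.
    apply: le_trans (pw2 (h y * G) (t1 * kappa y - J t1) (t2 * kappa y - J t2) (mulr_ge0 (h0 _ Yy) G0)).
    apply: eqle; rewrite /EE /a1 /a2.
    rewrite (E2 (t1 * kappa y - J t1) (t1 * kappa y) (- J t1)) //.
    rewrite (E2 (t2 * kappa y - J t2) (t2 * kappa y) (- J t2)) //.
    move: (expR _) (expR _) (expR _) (expR _) (h y) => e1 e2 e3 e4 hy; ring.
  rewrite L3 lee_fin; apply: eqle; rewrite /a1 /a2.
  transitivity (G * (expR (- J t1) * expR (J t1) - expR (- J t2) * expR (J t2))).
    by rewrite -!expRD !addNr expR0 subrr mulr0.
  by move: (expR (- J t1)) (expR (J t1)) (expR (- J t2)) (expR (J t2)) => e1 e2 e3 e4; ring.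
have V20in' (t1 t2 G K : R) : 0 <= G ->
  (\int[mu]_(y in Y) ((h y * G) * expR (t1 * kappa y - J t1) *
     `|ln ((h y * G) * expR (t1 * kappa y - J t1) / ((h y * G) * expR (t2 * kappa y - J t2))) - K| ^+ 2)%:E <=
    (G * (8 * (expR (J (2 * t1 - t2) - 2 * J t1 + J t2) - 1) + 2 * K ^+ 2))%:E)%E.
  move=> G0.
  pose a1 := 8 * (G * expR (- (2 * J t1) + J t2)).
  pose a2 := 8 * (G * expR (- J t2)).
  pose a3 := (2 * K ^+ 2 - 16) * (G * expR (- J t1)).
  apply: le_trans (@le_int _ _ _ mu Y _ (fun y => (a1 * EE h kappa (2 * t1 - t2) y + a2 * EE h kappa t2 y + a3 * EE h kappa t1 y)%:E) _) _.
    move=> y Yy; rewrite lee_fin.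
    apply: le_trans (pw3 (h y * G) (t1 * kappa y - J t1) (t2 * kappa y - J t2) K (mulr_ge0 (h0 _ Yy) G0)) _.
    apply: eqle; rewrite /EE /a1 /a2 /a3.
    rewrite (E2 _ ((2 * t1 - t2) * kappa y) (- (2 * J t1) + J t2)); last by move: (J t1) (J t2) => j1 j2; ring.
    rewrite (E2 (t1 * kappa y - J t1) (t1 * kappa y) (- J t1)) //.
    rewrite (E2 (t2 * kappa y - J t2) (t2 * kappa y) (- J t2)) //.
    move: (expR ((2 * t1 - t2) * kappa y)) (expR (- (2 * J t1) + J t2)) (expR (t1 * kappa y)) (expR (- J t1)) (expR (t2 * kappa y)) (expR (- J t2)) (h y) => e1 e2 e3 e4 e5 e6 hy; ring.
  rewrite L3 lee_fin; apply: eqle; rewrite /a1 /a2 /a3.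
  transitivity (G * (8 * (expR (- (2 * J t1) + J t2) * expR (J (2 * t1 - t2))) + 8 * (expR (- J t2) * expR (J t2)) + (2 * K ^+ 2 - 16) * (expR (- J t1) * expR (J t1)))).
    by move: (expR (- (2 * J t1) + J t2)) (expR (J (2 * t1 - t2))) (expR (- J t1)) (expR (J t1)) (expR (- J t2)) (expR (J t2)) => e1 e2 e3 e4 e5 e6; ring.
  rewrite -!expRD !addNr expR0.
  rewrite (_ : - (2 * J t1) + J t2 + J (2 * t1 - t2) = J (2 * t1 - t2) - 2 * J t1 + J t2); last by move: (J t1) (J t2) (J (2 * t1 - t2)) => j1 j2 j3; ring.
  by move: (expR _) => e; ring.
have Hin' (t1 t2 G : R) : 0 <= G ->
  (\int[mu]_(y in Y) ((Num.sqrt ((h y * G) * expR (t1 * kappa y - J t1)) - Num.sqrt ((h y * G) * expR (t2 * kappa y - J t2))) ^+ 2)%:E <=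
    (G * (2 - 2 * expR (J ((t1 + t2) / 2) - (J t1 + J t2) / 2)))%:E)%E.
  move=> G0.
  pose a1 := G * expR (- J t1).
  pose a2 := G * expR (- J t2).
  pose a3 := - 2 * (G * expR (- ((J t1 + J t2) / 2))).
  apply: le_trans (@le_int _ _ _ mu Y _ (fun y => (a1 * EE h kappa t1 y + a2 * EE h kappa t2 y + a3 * EE h kappa ((t1 + t2) / 2) y)%:E) _) _.
    move=> y Yy; rewrite lee_fin.
    apply: le_trans (pw4 (h y * G) (t1 * kappa y - J t1) (t2 * kappa y - J t2) (mulr_ge0 (h0 _ Yy) G0)) _.
    apply: eqle; rewrite /EE /a1 /a2 /a3.
    rewrite (E2 ((t1 * kappa y - J t1 + (t2 * kappa y - J t2)) / 2) ((t1 + t2) / 2 * kappa y) (- ((J t1 + J t2) / 2))); last by move: (J t1) (J t2) => j1 j2; ring.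
    rewrite (E2 (t1 * kappa y - J t1) (t1 * kappa y) (- J t1)) //.
    rewrite (E2 (t2 * kappa y - J t2) (t2 * kappa y) (- J t2)) //.
    move: (expR ((t1 + t2) / 2 * kappa y)) (expR (- ((J t1 + J t2) / 2))) (expR (t1 * kappa y)) (expR (- J t1)) (expR (t2 * kappa y)) (expR (- J t2)) (h y) => e1 e2 e3 e4 e5 e6 hy; ring.
  rewrite L3 lee_fin; apply: eqle; rewrite /a1 /a2 /a3.
  transitivity (G * (expR (- J t1) * expR (J t1) + expR (- J t2) * expR (J t2) - 2 * (expR (- ((J t1 + J t2) / 2)) * expR (J ((t1 + t2) / 2))))).
    by move: (expR (- ((J t1 + J t2) / 2))) (expR (J ((t1 + t2) / 2))) (expR (- J t1)) (expR (J t1)) (expR (- J t2)) (expR (J t2)) => e1 e2 e3 e4 e5 e6; ring.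
  rewrite -!expRD !addNr expR0 (addrC (- ((J t1 + J t2) / 2))).
  by move: (expR _) => e; ring.
have ivtl p q u : Num.min (zeta p) (zeta q) <= u <= Num.max (zeta p) (zeta q) ->
    exists su, Num.min p q <= su <= Num.max p q /\ derive1 J u = l su.
  move=> hu; have [pq|qp] := leP p q.
  - have [c cin zc] := IVT pq (derivable_within_continuous (fun x _ => dz x)) hu.
    by exists c; rewrite -zc zl; split => //; move: cin; rewrite in_itv.
  - rewrite minC maxC in hu.
    have [c cin zc] := IVT (ltW qp) (derivable_within_continuous (fun x _ => dz x)) hu.
    by exists c; rewrite -zc zl; split => //; move: cin; rewrite in_itv.
split; last first.
  exists (Ml * Mz / 2 + 1); split.
    have : 0 <= Ml * Mz / 2 by rewrite mulr_ge0 ?invr_ge0 ?mulr_ge0.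
    lra.
  move=> f1 f2 _ _.
  rewrite /hellinger2 /nu_int.
  case E: (supnorm f1 f2) => [s| |]; last 2 first.
  - rewrite mulyy gt0_muley ?leey // lte_fin.
    have : 0 <= Ml * Mz / 2 by rewrite mulr_ge0 ?invr_ge0 ?mulr_ge0.
    lra.
  - rewrite mulNyNy gt0_muley ?leey // lte_fin.
    have : 0 <= Ml * Mz / 2 by rewrite mulr_ge0 ?invr_ge0 ?mulr_ge0.
    lra.
  have Hs := supP _ _ _ E.
  apply: le_trans (@le_int _ _ _ V setT _ (fun x => (g x * ((Ml * Mz / 2 + 1) * (s * s)))%:E) _) _; last first.
    rewrite intg ?EFinM //.
    have : 0 <= Ml * Mz / 2 by rewrite mulr_ge0 ?invr_ge0 ?mulr_ge0.
    have : 0 <= s by apply: le_trans (Hs point).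
    by move=> s0 M0; rewrite mulr_ge0 ?mulr_ge0 //; lra.
  move=> x _.
  under eq_integral => y _ do rewrite !piE.
  apply: le_trans (Hin' _ _ _ (g0 x)) _.
  rewrite lee_fin; apply: (ler_wpM2l (g0 x)).
  set t1 := zeta (f1 x); set t2 := zeta (f2 x).
  set D := `|f1 x - f2 x|.
  have D0 : 0 <= D by rewrite /D normr_ge0.
  have Ds : D <= s by exact: Hs.
  have K : forall u v, (t1 + t2) / 2 - `|(t1 - t2) / 2| <= u <= (t1 + t2) / 2 + `|(t1 - t2) / 2| ->
     (t1 + t2) / 2 - `|(t1 - t2) / 2| <= v <= (t1 + t2) / 2 + `|(t1 - t2) / 2| ->
     `|derive1 J u - derive1 J v| <= Ml * D.
    move=> u v /mm hu /mm hv.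
    have [su [su1 su2]] := ivtl _ _ _ hu.
    have [sv [sv1 sv2]] := ivtl _ _ _ hv.
    rewrite su2 sv2; apply: le_trans (llip _ _) _.
    by apply: ler_wpM2l => //; exact: mmlen.
  have := sd J ((t1 + t2) / 2) ((t1 - t2) / 2) (Ml * D) dJ K.
  rewrite (_ : (t1 + t2) / 2 + (t1 - t2) / 2 = t1); last by lra.
  rewrite (_ : (t1 + t2) / 2 - (t1 - t2) / 2 = t2); last by lra.
  have ze : `|(t1 - t2) / 2| <= Mz * D / 2.
    have := zlip (f1 x) (f2 x); rewrite -/t1 -/t2 -/D !ler_norml => /andP[a b].
    apply/andP; split; lra.
  have ex := expR_ge1Dx (J ((t1 + t2) / 2) - (J t1 + J t2) / 2).
  move: (J t1) (J t2) (J ((t1 + t2) / 2)) ex => j1 j2 jm ex.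
  rewrite ler_norml => /andP[_ b].
  have : Ml * D * `|(t1 - t2) / 2| <= Ml * D * (Mz * D / 2) by rewrite ler_wpM2l ?mulr_ge0.
  have : D * D <= s * s by rewrite ler_pM.
  move=> q3 q4; move: ex b q4.
  move: (`|(t1 - t2) / 2|) (expR _) => w e ex b q4.
  have M0 : 0 <= Ml * Mz / 2 by rewrite mulr_ge0 ?invr_ge0 ?mulr_ge0.
  have q1 : Ml * Mz / 2 * (D * D) <= Ml * Mz / 2 * (s * s) by rewrite ler_wpM2l.
  have q2 : 0 <= s * s by rewrite mulr_ge0 // (le_trans D0 Ds).
  have q5 : Ml * D * (Mz * D / 2) = Ml * Mz / 2 * (D * D) by ring.
  have q6 : (Ml * Mz / 2 + 1) * (s * s) = Ml * Mz / 2 * (s * s) + s * s by ring.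
  rewrite q6; lra.
move=> Omega [B HB].
set B0 := `|B|.
have B0p : 0 <= B0 by rewrite /B0 normr_ge0.
have OB t : Omega t -> `|t| <= B0 by move=> Ot; apply: le_trans (HB _ Ot) (ler_norm B).
set T := `|zeta 0| + Mz * B0.
have T0 : 0 <= T by rewrite /T addr_ge0 ?mulr_ge0.
have zT t : Omega t -> - T <= zeta t <= T.
  move=> Ot; rewrite -ler_norml.
  have h1 := zlip t 0; rewrite subr0 in h1.
  have h2 := ler_normD (zeta t - zeta 0) (zeta 0); rewrite subrK in h2.
  have h3 : Mz * `|t| <= Mz * B0 by rewrite ler_wpM2l // OB.
  rewrite /T; lra.
have T3 : 0 <= 3 * T by rewrite mulr_ge0.
have [C2 [C20 HC2]] := bnd (derive1 (derive1 J)) (3 * T) cJ2 T3.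
have Jlip u v : - (3 * T) <= u <= 3 * T -> - (3 * T) <= v <= 3 * T ->
    `|derive1 J u - derive1 J v| <= C2 * `|u - v|.
  by move=> hu hv; apply: (lip (derive1 J) (- (3 * T)) (3 * T) C2 u v ddJ HC2).
set Q := 2 * C2 * Mz ^+ 2.
set Dm := Q * (2 * B0) ^+ 2.
set C4 := Q * expR Dm + 1.
set C5 := 8 * (Q * expR Dm) + 2 * C4 ^+ 2 * (2 * B0) ^+ 2 + 1.
have Q0 : 0 <= Q by rewrite /Q; apply: mulr_ge0; [apply: mulr_ge0 | exact: sqr_ge0].
have QE0 : 0 <= Q * expR Dm by rewrite mulr_ge0 // expR_ge0.
have C4p : 0 < C4 by rewrite /C4; lra.
have C5p : 0 < C5.
  have : 0 <= 2 * C4 ^+ 2 * (2 * B0) ^+ 2 by apply: mulr_ge0; [apply: mulr_ge0 => //; exact: sqr_ge0 | exact: sqr_ge0].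
  rewrite /C5; lra.
have Dbound (f1 f2 : X -> R) x : (forall x, Omega (f1 x)) -> (forall x, Omega (f2 x)) ->
    expR (J (2 * zeta (f1 x) - zeta (f2 x)) - 2 * J (zeta (f1 x)) + J (zeta (f2 x))) - 1
    <= Q * expR Dm * `|f1 x - f2 x| ^+ 2.
  move=> O1 O2.
  have /andP[lo1 hi1] := zT _ (O1 x).
  have /andP[lo2 hi2] := zT _ (O2 x).
  set t1 := zeta (f1 x); set t2 := zeta (f2 x); set D := `|f1 x - f2 x|.
  rewrite -/t1 in lo1 hi1; rewrite -/t2 in lo2 hi2.
  have D0 : 0 <= D by rewrite /D normr_ge0.
  have hd : `|t1 - t2| <= Mz * D by exact: zlip.
  have Db : D <= 2 * B0.
    have := ler_normB (f1 x) (f2 x); have := OB _ (O1 x); have := OB _ (O2 x).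
    rewrite /D; lra.
  set w := `|t1 - t2|.
  have w0 : 0 <= w by rewrite /w normr_ge0.
  have w2 : w <= 2 * T by rewrite /w ler_norml; apply/andP; split; lra.
  have Kb u v : t1 - `|t1 - t2| <= u <= t1 + `|t1 - t2| -> t1 - `|t1 - t2| <= v <= t1 + `|t1 - t2| ->
      `|derive1 J u - derive1 J v| <= C2 * (2 * `|t1 - t2|).
    rewrite -/w => /andP[hu1 hu2] /andP[hv1 hv2].
    apply: le_trans (Jlip u v _ _) _.
    - apply/andP; split; lra.
    - apply/andP; split; lra.
    - apply: ler_wpM2l => //; rewrite ler_norml; apply/andP; split; lra.
  have := sd J t1 (t1 - t2) (C2 * (2 * `|t1 - t2|)) dJ Kb.
  rewrite -/w (_ : t1 + (t1 - t2) = 2 * t1 - t2); last by ring.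
  rewrite (_ : t1 - (t1 - t2) = t2); last by ring.
  move: (J (2 * t1 - t2)) (J t1) (J t2) => j3 j1 j2 sdb.
  have ww : w * w <= (Mz * D) * (Mz * D) by rewrite ler_pM.
  have absD : `|j3 - 2 * j1 + j2| <= Q * D ^+ 2.
    rewrite (_ : j3 - 2 * j1 + j2 = j3 + j2 - 2 * j1); last by ring.
    apply: le_trans sdb _.
    have -> : C2 * (2 * w) * w = 2 * C2 * (w * w) by ring.
    have -> : Q * D ^+ 2 = 2 * C2 * ((Mz * D) * (Mz * D)) by rewrite /Q; ring.
    by apply: ler_wpM2l => //; rewrite mulr_ge0.
  have DD : Q * D ^+ 2 <= Dm.
    rewrite /Dm; apply: ler_wpM2l => //.
    by rewrite !expr2 ler_pM.
  apply: le_trans (expm1_le _ _ (le_trans absD DD)) _.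
  rewrite [X in _ <= X](_ : _ = Q * D ^+ 2 * expR Dm); last by ring.
  by apply: ler_wpM2r => //; rewrite expR_ge0.
exists C4, C5; split => //; split => //.
move=> f1 f2 _ _ O1 O2.
rewrite /V20 /KLdiv /nu_int.
case E: (supnorm f1 f2) => [s| |]; last 2 first.
- by rewrite mulyy !gt0_muley ?leey // lte_fin.
- by rewrite mulNyNy !gt0_muley ?leey // lte_fin.
have Hs := supP _ _ _ E.
have sB : s <= 2 * B0.
  rewrite -lee_fin -E; apply: ge_ereal_sup => _ [x _ <-]; rewrite lee_fin.
  have := ler_normB (f1 x) (f2 x); have := OB _ (O1 x); have := OB _ (O2 x).
  lra.
have s0 : 0 <= s by apply: le_trans (Hs point).
have ss0 : 0 <= s * s by rewrite mulr_ge0.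
have KLup : (\int[V]_x \int[mu]_(y in Y) (pi f1 x y * ln (pi f1 x y / pi f2 x y))%:E <= (C4 * (s * s))%:E)%E.
  apply: le_trans (@le_int _ _ _ V setT _ (fun x => (g x * (C4 * (s * s)))%:E) _) _; last first.
    by rewrite intg // mulr_ge0 // ltW.
  move=> x _; under eq_integral => y _ do rewrite !piE.
  apply: le_trans (KLin' _ _ _ (g0 x)) _; rewrite lee_fin; apply: (ler_wpM2l (g0 x)).
  apply: le_trans (Dbound f1 f2 x O1 O2) _.
  have D0 : 0 <= `|f1 x - f2 x| by rewrite normr_ge0.
  have : `|f1 x - f2 x| ^+ 2 <= s * s by rewrite expr2 ler_pM // Hs.
  move: (`|f1 x - f2 x| ^+ 2) => z zs.
  have : Q * expR Dm * z <= Q * expR Dm * (s * s) by rewrite ler_wpM2l.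
  rewrite /C4; nra.
have KLlo : (0 <= \int[V]_x \int[mu]_(y in Y) (pi f1 x y * ln (pi f1 x y / pi f2 x y))%:E)%E.
  apply: integral_ge0 => x _; under eq_integral => y _ do rewrite !piE.
  exact: KLlo' _ _ _ (g0 x).
split; first by rewrite -!EFinM.
set KL := (\int[V]_x \int[mu]_(y in Y) (pi f1 x y * ln (pi f1 x y / pi f2 x y))%:E)%E in KLup KLlo *.
have KLf : KL \is a fin_num by rewrite ge0_fin_numE // (le_lt_trans KLup) ?ltry.
have K0 : 0 <= fine KL by rewrite -lee_fin fineK.
have KC : fine KL <= C4 * (s * s) by rewrite -lee_fin fineK.
move: (fine KL) K0 KC => K K0 KC.
apply: le_trans (@le_int _ _ _ V setT _ (fun x => (g x * (C5 * (s * s)))%:E) _) _; last first.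
  by rewrite intg ?EFinM // mulr_ge0 // ltW.
move=> x _; under eq_integral => y _ do rewrite !piE.
apply: le_trans (V20in' _ _ _ K (g0 x)) _; rewrite lee_fin; apply: (ler_wpM2l (g0 x)).
have := Dbound f1 f2 x O1 O2.
have D0 : 0 <= `|f1 x - f2 x| by rewrite normr_ge0.
have : `|f1 x - f2 x| ^+ 2 <= s * s by rewrite expr2 ler_pM // Hs.
move: (`|f1 x - f2 x| ^+ 2) (expR _) => z e zs ez.
have h1 : Q * expR Dm * z <= Q * expR Dm * (s * s) by rewrite ler_wpM2l.
have h2 : K ^+ 2 <= (C4 * (s * s)) ^+ 2 by rewrite ler_pXn2r ?nnegrE // (le_trans K0 KC).
have h3 : s * s <= (2 * B0) ^+ 2 by rewrite expr2 ler_pM.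
have h4 : (C4 * (s * s)) ^+ 2 <= C4 ^+ 2 * (2 * B0) ^+ 2 * (s * s).
  rewrite (_ : (C4 * (s * s)) ^+ 2 = C4 ^+ 2 * (s * s) * (s * s)); last by ring.
  rewrite (_ : C4 ^+ 2 * (2 * B0) ^+ 2 * (s * s) = C4 ^+ 2 * (s * s) * (2 * B0) ^+ 2); last by ring.
  by rewrite ler_wpM2l // mulr_ge0 // sqr_ge0.
have -> : C5 * (s * s) = 8 * (Q * expR Dm * (s * s)) + 2 * (C4 ^+ 2 * (2 * B0) ^+ 2 * (s * s)) + s * s.
  by rewrite /C5; ring.
lra.
Qed.
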